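(* Let $G=(V,E)$ be a graph containing at least one cycle, with $n$ vertices, $m$ edges and $k(G)$ connected components, and let $i$ be a nonnegative integer. Then $g(G)>n-k(G)-i$ if and only if \[[x^i]T_G(x,1)=\binom{m-i-1}{n-k(G)-i}.\]
   Context: $T_G(x,y)$ is the Tutte polynomial of $G$, i.e. $T_G(x,y)=\sum_{A\subseteq E}(x-1)^{r-rk(A)}(y-1)^{|A|-rk(A)}$ with $rk(A)=n-k(A)$, $k(A)$ the number of components of the spanning subgraph $(V,A)$, and $r=n-k(G)$. $[x^i]f(x)$ denotes the coefficient of $x^i$. The girth $g(G)$ is the length of a shortest cycle of $G$. *)

(* Defs.v *)
From mathcomp Require Import all_boot all_order all_algebra.
Set Implicit Arguments. Unset Strict Implicit. Unset Printing Implicit Defensive.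
Import Order.TTheory GRing.Theory Num.Theory.

(* A (multi)graph G = (V, E) with loops and parallel edges allowed:
   vertex set V, edge set E (finite types), and ends e = endpoints of e. *)
Section Graph.
Variables (V E : finType) (ends : E -> V * V).

Definition joins (e : E) (u v : V) : bool :=
  (ends e == (u, v)) || (ends e == (v, u)).

Definition adj (A : {set E}) : rel V :=
  fun u v => [exists e in A, joins e u v].

Definition ncomp (A : {set E}) : nat := n_comp (connect (adj A)) (predT : pred V).

Definition rk (A : {set E}) : nat := #|V| - ncomp A.

Definition grank : nat := rk [set: E].

Local Open Scope ring_scope.

(* Tutte polynomial as a polynomial in x (outer variable) with coefficients
   polynomials in y (inner variable):
   T_G(x,y) = sum_{A subset E} (x-1)^(r - rk A) (y-1)^(|A| - rk A). *)
Definition tutte : {poly {poly int}} :=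
  \sum_(A : {set E}) ('X - 1) ^+ (grank - rk A) * (('X - 1) ^+ (#|A| - rk A))%:P.

Definition tutte_x1 : {poly int} := map_poly (fun p : {poly int} => p.[1]) tutte.

Local Close Scope ring_scope.

(* A cycle of length l >= 1: distinct vertices v_0..v_{l-1}, distinct edges
   e_0..e_{l-1}, e_j joining v_j and v_{j+1 mod l}.  (l = 1: a loop;
   l = 2: two parallel edges.) *)
Definition cycle_of_len (l : nat) : bool :=
  [exists vs : l.-tuple V, exists es : l.-tuple E,
     [&& 0 < l, uniq vs, uniq es &
      [forall j : 'I_l, joins (tnth es j) (tnth vs j)
                                 (nth (tnth vs j) vs ((j.+1) %% l)%N)]]].

Definition has_cycle : Prop := exists l, cycle_of_len l.

Definition girth (H : has_cycle) : nat := ex_minn H.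

End Graph.

(* binomial coefficient on integers, with the convention C(a,b) = 0 when
   b < 0 (and also when a < 0, which only occurs together with b < 0 in
   the statement, since m >= r + 1 for a graph with a cycle). *)
Definition binz (a b : int) : int :=
  if (0 <= b)%R && (0 <= a)%R then Posz (binomial (absz a) (absz b)) else 0.

(* Main.v *)
Require Import Defs.
From mathcomp Require Import all_boot all_order all_algebra.
From mathcomp Require Import zify.
Set Implicit Arguments. Unset Strict Implicit. Unset Printing Implicit Defensive.
Import Order.TTheory GRing.Theory Num.Theory.


Definition U (m r i : nat) : nat := if i <= r then 'C(m.-1 - i, r - i) else 0.

Lemma U_pascal m r i : 0 < r -> r < m -> U m r i = U m.-1 r i + U m.-1 r.-1 i.
Proof.
case: r => // R _; case: m => // M /= RM; rewrite /U.
have [iR|Ri] := leqP i R.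
  rewrite !ifT; try lia.
  have -> : M - i = (M.-1 - i).+1 by lia.
  have -> : R.+1 - i = (R - i).+1 by lia.
  by rewrite binS.
rewrite addn0.
case: (leqP i R.+1) => // iR1.
have -> : i = R.+1 by lia.
by rewrite subnn !bin0.
Qed.

Lemma U_loop_lt m r i : r < m -> i < r -> U m.-1 r i < U m r i.
Proof.
case: m => // M /= rM ir; rewrite /U !ifT; try lia.
have -> : M - i = (M.-1 - i).+1 by lia.
have -> : r - i = (r - i).-1.+1 by lia.
rewrite binS -[X in X < _]addn0 ltn_add2l bin_gt0; lia.
Qed.

Lemma U_loop_ge m r i : r < m -> r <= i -> U m.-1 r i = U m r i.
Proof.
move=> rm ri; rewrite /U; case: (leqP i r) => // ir.
have -> : i = r by lia.
by rewrite subnn !bin0.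
Qed.

Lemma U_coloop m r i : 0 < r -> U m r i.+1 = U m.-1 r.-1 i.
Proof.
move=> r0; rewrite /U.
have -> : (i.+1 <= r) = (i <= r.-1) by lia.
case: ifP => // _; congr 'C(_, _); lia.
Qed.

Lemma U_zero n r : r <= n -> U n.+1 r.+1 0 = 'C(n, r.+1).
Proof. by move=> rn; rewrite /U /= subn0. Qed.

Section G.
Variables (V E : finType) (ends : E -> V * V).

Lemma joinsC f u v : joins ends f u v = joins ends f v u.
Proof. by rewrite /joins orbC. Qed.

Lemma adj_sym A : symmetric (adj ends A).
Proof.
by move=> x y; apply/existsP/existsP => -[f /andP[fA j]]; exists f; rewrite fA joinsC.
Qed.

Lemma adj_sub (A B : {set E}) : A \subset B -> subrel (adj ends A) (adj ends B).
Proof.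
move=> /subsetP sAB x y /existsP[f /andP[fA j]]; apply/existsP; exists f.
by rewrite sAB.
Qed.

Lemma connect_mono (A B : {set E}) : A \subset B ->
  subrel (connect (adj ends A)) (connect (adj ends B)).
Proof.
move=> sAB; apply: connect_sub => x y h.
apply: connect1; exact: adj_sub sAB x y h.
Qed.

Lemma connect_ind (e R : rel V) : reflexive R -> transitive R -> subrel e R ->
  subrel (connect e) R.
Proof.
move=> Rr Rt eR x y /connectP[p]; elim: p x => [|z p IH] x /=; first by move=> _ ->.
by case/andP=> /eR exz /IH pz yl; apply: Rt exz (pz yl).
Qed.

Lemma ncomp_le A : ncomp ends A <= #|V|.
Proof. exact: max_card. Qed.

Lemma in_closure2 (e : rel V) u v x :
  (x \in closure e (pred2 u v)) = connect e x u || connect e x v.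
Proof.
apply/idP/idP.
  case/pred0Pn => t /andP[]; rewrite !inE => cxt /pred2P[] tu; subst t;
  by rewrite cxt ?orbT.
case/orP=> h; apply/pred0Pn; [exists u | exists v]; by rewrite !inE h /= eqxx ?orbT.
Qed.

Lemma connect_idem (e : rel V) : connect (connect e) =2 connect e.
Proof.
move=> x y; apply/idP/idP; last exact: connect1.
by apply: connect_sub => {}x {}y.
Qed.

Lemma ncompE A : ncomp ends A = n_comp (adj ends A) V.
Proof.
rewrite /ncomp (eq_n_comp (connect_idem _)).
by apply: eq_n_comp_r.
Qed.

Local Notation cn A := (connect (adj ends A)).
Lemma ncompU1 A f :
  ncomp ends A = ncomp ends (f |: A) + ~~ connect (adj ends A) (ends f).1 (ends f).2.
Proof.
set u := (ends f).1; set v := (ends f).2.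
have symc : connect_sym (adj ends A) := sym_connect_sym (adj_sym A).
have symc' : connect_sym (adj ends (f |: A)) := sym_connect_sym (adj_sym _).
have cc' : subrel (cn A) (cn (f |: A)) by apply: connect_mono; rewrite subsetUr.
have c'uv : cn (f |: A) u v.
  apply: connect1; apply/existsP; exists f; rewrite setU11 /= /joins.
  by rewrite /u /v -surjective_pairing eqxx.
pose a x := cn A x u || cn A x v.
pose R x y := cn A x y || (a x && a y).
have c'R : subrel (cn (f |: A)) R.
  apply: connect_ind.
  - by move=> x; rewrite /R connect0.
  - move=> y x z; rewrite /R /a => /orP[cxy|/andP[ax ay]] /orP[cyz|/andP[ay' az]].
    + by rewrite (connect_trans cxy cyz).
    + by rewrite az andbT !(same_connect symc cxy) ay' orbT.
    + rewrite ax /= -!(same_connect symc cyz).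
      by rewrite ay orbT.
    + by rewrite ax az orbT.
  - move=> x y /existsP[g /andP[]]; rewrite in_setU1 => /orP[/eqP->|gA] j.
      move: j; rewrite /joins /R /a => /orP[] /eqP e1;
      by rewrite /u /v e1 /= !connect0 !orbT.
    by rewrite /R connect1 //; apply/existsP; exists g; rewrite gA.
have ac : forall x, (x \in closure (adj ends A) (pred2 u v)) = a x.
  by move=> x; rewrite in_closure2.
have ac' : closure (adj ends A) (pred2 u v) =i closure (adj ends (f |: A)) (pred2 u v).
  move=> x; rewrite ac in_closure2; apply/idP/idP.
    by case/orP=> /cc' ->; rewrite ?orbT.
  by case/orP=> /c'R /orP[h|/andP[h _]] //; rewrite /a h ?orbT.
set a0 := closure (adj ends A) (pred2 u v).
rewrite !ncompE !(n_compC a0) n_comp_closure2 // (eq_n_comp_r ac') n_comp_closure2 //.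
suff eqX : n_comp (adj ends A) [predC a0] = n_comp (adj ends (f |: A)) [predC a0].
  by rewrite eqX c'uv /= add1n !addSn addnC.
rewrite /n_comp_mem; apply: eq_card => x; rewrite !inE.
case ax: (x \in a0); rewrite ?andbF ?andbT //.
have ex : connect (adj ends A) x =1 connect (adj ends (f |: A)) x.
  move=> y; apply/idP/idP; first exact: cc'.
  case/c'R/orP => // /andP[]; by rewrite -ac ax.
by rewrite /roots /root; congr (odflt _ _ == _); apply: eq_pick.
Qed.


Local Notation rk := (rk ends).

Lemma rkU1 A f : rk (f |: A) = rk A + ~~ cn A (ends f).1 (ends f).2.
Proof.
rewrite /rk; have := ncompU1 A f; have := ncomp_le A; lia.
Qed.

Lemma rkU1_le A f : rk A <= rk (f |: A) <= (rk A).+1.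
Proof. by rewrite rkU1; case: (~~ _); rewrite ?addn0 ?addn1 ?leqnn ?leqnSn. Qed.

Lemma rk_dim (A B : {set E}) f : A \subset B ->
  rk (f |: B) - rk B <= rk (f |: A) - rk A.
Proof.
move=> sAB; rewrite !rkU1 !addKn.
case cA: (cn A _ _) => /=; last by case: (~~ _).
by rewrite (connect_mono sAB cA).
Qed.

Lemma rk0 : rk set0 = 0.
Proof.
rewrite /rk ncompE /n_comp_mem.
suff -> : #|predI (roots (adj ends set0)) (mem V)| = #|V| by rewrite subnn.
apply: eq_card => x; rewrite !inE andbT /roots.
have h : forall y, cn set0 x y -> y = x.
  move=> y cxy; apply/esym/eqP; move: cxy; apply: (@connect_ind (adj ends set0) (fun a b => a == b)) => //.
  - by move=> a b c /eqP-> /eqP->.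
  - by move=> a b /existsP[g]; rewrite inE.
have := h _ (connect_root (adj ends set0) x).
by move=> ->; rewrite eqxx.
Qed.

Lemma set_ind (P : {set E} -> Prop) : P set0 ->
  (forall x (X : {set E}), x \notin X -> P X -> P (x |: X)) -> forall X, P X.
Proof.
move=> P0 PS X; have [n] := ubnP #|X|; elim: n X => [|n IH] X //.
case: (set_0Vmem X) => [->|[x xX]] // cX.
rewrite -(setD1K xX); apply: PS; first by rewrite !inE eqxx.
by apply: IH; move: cX; rewrite (cardsD1 x X) xX add1n.
Qed.

Lemma rk_addU (X B : {set E}) : rk (X :|: B) <= rk B + #|X|.
Proof.
elim/set_ind: X => [|x X xX IH]; first by rewrite set0U cards0 addn0.
rewrite -setUA cardsU1 xX; have := rkU1_le (X :|: B) x; lia.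
Qed.

Lemma rk_mono (A B : {set E}) : A \subset B -> rk A <= rk B.
Proof.
move=> sAB; rewrite -(setUidPr sAB).
elim/set_ind: B {sAB} => [|x X xX IH]; first by rewrite setU0.
rewrite setUCA; have := rkU1_le (A :|: X) x; lia.
Qed.

Lemma rk_le_card A : rk A <= #|A|.
Proof. by have := rk_addU A set0; rewrite setU0 rk0. Qed.



Definition indep (A0 X : {set E}) := rk (X :|: A0) == rk A0 + #|X|.
Definition rr (A0 S : {set E}) := rk (S :|: A0) - rk A0.

Lemma indep0 A0 : indep A0 set0.
Proof. by rewrite /indep set0U cards0 addn0. Qed.

Lemma rk_mono_U (A X : {set E}) : rk A <= rk (X :|: A).
Proof. by apply: rk_mono; rewrite subsetUr. Qed.

Lemma rr_le A0 S : rr A0 S <= #|S|.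
Proof. rewrite /rr; have := rk_addU S A0; lia. Qed.

Lemma indep_card (A0 S X : {set E}) : X \subset S -> indep A0 X -> #|X| <= rr A0 S.
Proof.
move=> sXS /eqP iX; rewrite /rr.
have : rk (X :|: A0) <= rk (S :|: A0) by apply: rk_mono; apply: setSU.
lia.
Qed.

Lemma indep_sub (A0 X Y : {set E}) : Y \subset X -> indep A0 X -> indep A0 Y.
Proof.
move=> sYX /eqP iX; apply/eqP.
have eX : X :|: A0 = (X :\: Y) :|: (Y :|: A0).
  apply/setP => z; rewrite !inE; have := subsetP sYX z.
  by case: (z \in X); case: (z \in Y); case: (z \in A0) => //= /(_ isT).
have cX : #|X| = #|X :\: Y| + #|Y|.
  by rewrite -(cardsID Y X) (setIidPr sYX) addnC.
have h1 := rk_addU (X :\: Y) (Y :|: A0).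
have h2 := rk_addU Y A0.
rewrite -eX iX cX in h1; lia.
Qed.



Lemma SeU (S A0 : {set E}) e : e \in S -> S :|: A0 = e |: ((S :\ e) :|: A0).
Proof. by move=> eS; rewrite setUA setD1K. Qed.

Lemma YeU (Y A0 : {set E}) e : (e |: Y) :|: A0 = e |: (Y :|: A0).
Proof. by rewrite setUA. Qed.

Lemma YeU' (Y A0 : {set E}) e : Y :|: (e |: A0) = e |: (Y :|: A0).
Proof. by rewrite setUCA. Qed.

Lemma loop_dep (A0 Y : {set E}) e : rk (e |: A0) = rk A0 -> e \notin Y ->
  ~~ indep A0 (e |: Y).
Proof.
move=> le eY; rewrite /indep YeU cardsU1 eY.
have := rk_dim e (subsetUr Y A0); have := rk_addU Y A0.
have := rkU1_le (Y :|: A0) e; rewrite le; lia.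
Qed.

Lemma indepU1 (A0 Y : {set E}) e : rk (e |: A0) = (rk A0).+1 -> e \notin Y ->
  indep A0 (e |: Y) = indep (e |: A0) Y.
Proof.
by move=> le eY; rewrite /indep YeU YeU' cardsU1 eY le add1n addnS addSn.
Qed.

Lemma coloop_inc (A0 S Y : {set E}) e : e \in S ->
  rk ((S :\ e) :|: A0) < rk (S :|: A0) -> Y \subset S :\ e ->
  rk (e |: (Y :|: A0)) = (rk (Y :|: A0)).+1.
Proof.
move=> eS lt sY.
have := rk_dim e (setSU A0 sY); rewrite -SeU //.
have := rkU1_le (Y :|: A0) e; lia.
Qed.

Lemma coloop_indep (A0 S Y : {set E}) e : e \in S ->
  rk ((S :\ e) :|: A0) < rk (S :|: A0) -> Y \subset S :\ e ->
  indep A0 (e |: Y) = indep A0 Y.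
Proof.
move=> eS lt sY; have eY : e \notin Y by move: sY; rewrite subsetD1 => /andP[].
by rewrite /indep YeU (coloop_inc eS lt sY) cardsU1 eY add1n addnS.
Qed.

Lemma coloop_nonloop (A0 S : {set E}) e : e \in S ->
  rk ((S :\ e) :|: A0) < rk (S :|: A0) -> rk (e |: A0) = (rk A0).+1.
Proof.
move=> eS lt; have := coloop_inc eS lt (sub0set _); rewrite set0U //.
Qed.

Lemma rr_loop (A0 S : {set E}) e : e \in S -> rk (e |: A0) = rk A0 ->
  rr A0 S = rr A0 (S :\ e).
Proof.
move=> eS le; rewrite /rr (SeU A0 eS).
have := rk_dim e (subsetUr (S :\ e) A0); have := rkU1_le ((S :\ e) :|: A0) e.
rewrite le; lia.
Qed.

Lemma rr_coloop (A0 S : {set E}) e : e \in S ->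
  rk ((S :\ e) :|: A0) < rk (S :|: A0) -> rr A0 S = (rr A0 (S :\ e)).+1.
Proof.
move=> eS lt; rewrite /rr; have := rk_mono_U A0 (S :\ e).
have := rkU1_le ((S :\ e) :|: A0) e; rewrite -SeU //; lia.
Qed.

Lemma rr_gen1 (A0 S : {set E}) e : e \in S ->
  ~~ (rk ((S :\ e) :|: A0) < rk (S :|: A0)) -> rr A0 (S :\ e) = rr A0 S.
Proof.
move=> eS nlt; rewrite /rr; have : rk ((S :\ e) :|: A0) <= rk (S :|: A0).
  by apply: rk_mono; apply: setSU; apply: subD1set.
lia.
Qed.

Lemma rr_gen2 (A0 S : {set E}) e : e \in S -> rk (e |: A0) = (rk A0).+1 ->
  rr (e |: A0) (S :\ e) = (rr A0 S).-1 /\ 0 < rr A0 S.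
Proof.
move=> eS nl; rewrite /rr YeU' -SeU //.
have : rk (e |: A0) <= rk (S :|: A0).
  by apply: rk_mono; rewrite subUset sub1set inE eS subsetUr.
rewrite nl; lia.
Qed.



Lemma big_split_set (R : Type) (idx : R) (op : Monoid.com_law idx)
  (S : {set E}) e (P : pred {set E}) (F : {set E} -> R) : e \in S ->
  \big[op/idx]_(X : {set E} | (X \subset S) && P X) F X =
  op (\big[op/idx]_(X : {set E} | (X \subset S :\ e) && P X) F X)
     (\big[op/idx]_(X : {set E} | (X \subset S :\ e) && P (e |: X)) F (e |: X)).
Proof.
move=> eS; rewrite (bigID (fun X : {set E} => e \in X)) /= Monoid.mulmC; congr (op _ _).
  by apply: eq_bigl => X; rewrite subsetD1 andbAC.
rewrite (reindex_onto (fun Y => e |: Y) (fun X => X :\ e)) /=; last first.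
  by move=> X /andP[_ eX]; rewrite setD1K.
apply: eq_bigl => Y; rewrite setU11 andbT subsetD1.
case eY: (e \in Y) => /=.
  have hn : (e |: Y) :\ e != Y by apply/eqP => h; move: eY; rewrite -h !inE eqxx.
  by rewrite (negbTE hn) !andbF.
rewrite setU1K ?eY // eqxx andbT subUset sub1set eS /=.
by rewrite andbAC andbT.
Qed.

Lemma cyc1 l : cycle_of_len ends l -> exists2 X : {set E}, #|X| = l & rk X < #|X|.
Proof.
move=> /existsP[vs /existsP[es /and4P[l0 uv ue /forallP H]]].
case: l l0 vs es uv ue H => // L _ vs es uv ue H.
pose v0 := tnth vs ord0; pose e0 := tnth es ord0.
have J : forall j, j < L.+1 ->
    joins ends (nth e0 es j) (nth v0 vs j) (nth v0 vs (j.+1 %% L.+1)).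
  move=> j jl; have := H (Ordinal jl); rewrite (tnth_nth e0) (tnth_nth v0) /=.
  by rewrite (set_nth_default v0) // size_tuple ltn_pmod.
pose X' := [set x in take L es].
exists [set x in es]; first by rewrite cardsE (card_uniqP ue) size_tuple.
have eX : [set x in es] = nth e0 es L |: X'.
  apply/setP => z; rewrite !inE.
  have es_eq : tval es = rcons (take L es) (nth e0 es L).
    by rewrite -take_nth ?size_tuple // take_oversize ?size_tuple.
  transitivity (z \in rcons (take L es) (nth e0 es L)); first by rewrite -es_eq.
  by rewrite mem_rcons inE.
have cX' : #|X'| <= L.
  by rewrite cardsE (leq_trans (card_size _)) // size_take size_tuple ltnS leqnn.
have C : forall j, j <= L -> connect (adj ends X') (nth v0 vs 0) (nth v0 vs j).
  elim=> [|j IHj] jL; first exact: connect0.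
  apply: (connect_trans (IHj (ltnW jL))); apply: connect1.
  have := J j (leq_trans jL (leqnSn _)); rewrite modn_small ?ltnS // => jn.
  apply/existsP; exists (nth e0 es j); rewrite jn andbT inE.
  have <- : nth e0 (take L es) j = nth e0 es j by rewrite nth_take.
  by apply: mem_nth; rewrite size_take size_tuple ltnS leqnn.
have := J L (leqnn _); rewrite modnn => jL.
have cc : connect (adj ends X') (ends (nth e0 es L)).1 (ends (nth e0 es L)).2.
  have sc := sym_connect_sym (adj_sym X').
  move: jL; rewrite /joins => /orP[] /eqP ->; rewrite /=.
    by rewrite sc; exact: C.
  exact: C.
rewrite cardsE (card_uniqP ue) size_tuple eX rkU1 cc addn0.
by apply: leq_ltn_trans (rk_le_card _) _; rewrite ltnS.
Qed.


Lemma dep_edge (X : {set E}) : rk X < #|X| ->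
  exists2 e, e \in X & connect (adj ends (X :\ e)) (ends e).1 (ends e).2.
Proof.
elim/set_ind: X => [|x X xX IH]; first by rewrite rk0 cards0.
rewrite rkU1 cardsU1 xX add1n.
case cx: (connect _ _ _) => /=.
  by move=> _; exists x; rewrite ?setU11 // setU1K.
rewrite addn1 ltnS => /IH [f fX cf]; exists f; first by rewrite setU1r.
move: cf; apply: connect_mono; apply: setSD; exact: subsetUr.
Qed.

Section Pe.
Variables (Y : {set E}) (e : E).
Definition pe (x y : V) := odflt e [pick f in Y | joins ends f x y].

Lemma pe_spec x y : adj ends Y x y -> pe x y \in Y /\ joins ends (pe x y) x y.
Proof.
move=> /existsP[f /andP[fY j]]; rewrite /pe; case: pickP => [g /andP[gY gj]|/(_ f)] //.
by rewrite fY j.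
Qed.

Lemma joins_eq f a b c d : joins ends f a b -> joins ends f c d -> (c == a) || (c == b).
Proof.
rewrite /joins => /orP[] /eqP -> /orP[] /eqP [] -> -> ; by rewrite eqxx ?orbT.
Qed.

Lemma mem_pm s x f : path (adj ends Y) x s -> f \in pairmap pe x s ->
  exists a b, [/\ a \in x :: s, b \in x :: s, joins ends f a b & f \in Y].
Proof.
elim: s x => [|y s IH] x //= /andP[axy ps]; rewrite inE => /orP[/eqP->|fin].
  have [pY j] := pe_spec axy; exists x, y; split => //; by rewrite !inE eqxx ?orbT.
have [a [b [ha hb j fY]]] := IH y ps fin; exists a, b; split => //.
  by move: ha; rewrite !inE => ->; rewrite orbT.
by move: hb; rewrite !inE => ->; rewrite orbT.
Qed.

Lemma uniq_pm s x : path (adj ends Y) x s -> uniq (x :: s) -> uniq (pairmap pe x s).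
Proof.
elim: s x => [|y s IH] x //= /andP[axy ps] /andP[xn us]; rewrite IH // andbT.
apply/negP => /(mem_pm ps) [a [b [ha hb j _]]].
have [_ j0] := pe_spec axy.
by case/orP: (joins_eq j j0) => /eqP ex; move: xn; rewrite ex ?ha ?hb.
Qed.
End Pe.

Lemma cyc2 (X : {set E}) : rk X < #|X| -> exists2 l, l <= #|X| & cycle_of_len ends l.
Proof.
move=> dep; have [e eX ce] := dep_edge dep.
set Y := X :\ e; set u := (ends e).1; set v := (ends e).2.
case/connectP: ce => p pp lp.
case/shortenP: pp lp => p' pp' up' _ lp'.
pose vs := u :: p'; pose es := rcons (pairmap (pe Y e) u p') e.
have ses : size es = size vs by rewrite size_rcons size_pairmap.
have pmY : {subset pairmap (pe Y e) u p' <= Y}.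
  by move=> f /(mem_pm pp') [a [b [_ _ _ ->]]].
have ues : uniq es.
  rewrite rcons_uniq uniq_pm // andbT; apply/negP => /pmY.
  by rewrite !inE eqxx.
have ses' : {subset es <= X}.
  move=> f; rewrite mem_rcons inE => /orP[/eqP->//|/pmY].
  by rewrite inE => /andP[].
exists (size vs).
  rewrite -ses -(card_uniqP ues) -cardsE; apply: subset_leq_card.
  by apply/subsetP => f; rewrite inE => /ses'.
apply/existsP; exists (in_tuple vs).
apply/existsP; exists (Tuple (introT eqP ses)).
apply/and4P; split => //=.
apply/forallP => j; rewrite (tnth_nth u) (tnth_nth e) /=.
rewrite (set_nth_default u); last by rewrite ltn_pmod.
have jl := ltn_ord j.
case: (ltnP j (size p')) => jk.
  rewrite nth_rcons size_pairmap jk (nth_pairmap u) // modn_small //.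
  by have [_] := pe_spec e ((pathP u pp') _ jk).
have jv : nat_of_ord j = size p' by apply/eqP; rewrite eqn_leq jk -ltnS jl.
rewrite jv nth_rcons size_pairmap ltnn eqxx modnn /=.
have := nth_last u (u :: p'); rewrite /= => ->; rewrite -lp' /joins.
by rewrite /u /v -surjective_pairing eqxx orbT.
Qed.

Local Open Scope ring_scope.

Definition tp (A0 S : {set E}) : {poly int} :=
  \sum_(X : {set E} | (X \subset S) && indep A0 X) ('X - 1) ^+ (rr A0 S - #|X|).

Lemma tp_loop (A0 S : {set E}) e : e \in S -> rk (e |: A0) = rk A0 ->
  tp A0 S = tp A0 (S :\ e).
Proof.
move=> eS le; rewrite [LHS]/tp (big_split_set _ _ _ eS) /=.
have h0 : forall Y : {set E}, ((Y \subset S :\ e) && indep A0 (e |: Y)) = false.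
  move=> Y; apply/andP => -[sY iY]; move: sY; rewrite subsetD1 => /andP[_ eY].
  by move: iY; apply/negP; exact: (loop_dep le eY).
rewrite (eq_bigl _ _ h0) big_pred0_eq addr0 /tp (rr_loop eS le).
by [].
Qed.

Lemma tp_gen (A0 S : {set E}) e : e \in S -> rk (e |: A0) = (rk A0).+1 ->
  ~~ (rk ((S :\ e) :|: A0) < rk (S :|: A0))%N ->
  tp A0 S = tp A0 (S :\ e) + tp (e |: A0) (S :\ e).
Proof.
move=> eS nl nc.
rewrite [LHS]/tp (big_split_set _ _ _ eS) /=.
have -> : tp A0 (S :\ e) = \sum_(X : {set E} | (X \subset S :\ e) && indep A0 X) ('X - 1) ^+ (rr A0 S - #|X|).
  by rewrite /tp (rr_gen1 eS nc).
have -> : tp (e |: A0) (S :\ e) = \sum_(X : {set E} | (X \subset S :\ e) && indep A0 (e |: X)) ('X - 1) ^+ (rr A0 S - #|e |: X|).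
  rewrite /tp; apply: eq_big => Y.
    case sY: (Y \subset S :\ e) => //=; rewrite indepU1 //.
    by move: sY; rewrite subsetD1 => /andP[].
  move=> /andP[sY _]; have eY : e \notin Y by move: sY; rewrite subsetD1 => /andP[].
  have [h1 h2] := rr_gen2 eS nl.
  rewrite h1 cardsU1 eY add1n; congr (_ ^+ _); lia.
by [].
Qed.
Lemma tp_coloop (A0 S : {set E}) e : e \in S ->
  (rk ((S :\ e) :|: A0) < rk (S :|: A0))%N ->
  tp A0 S = 'X * tp A0 (S :\ e).
Proof.
move=> eS lt; rewrite [LHS]/tp (big_split_set _ _ _ eS) /= (rr_coloop eS lt).
rewrite [X in _ + X](eq_bigl (fun Y : {set E} => (Y \subset S :\ e) && indep A0 Y)); last first.
  by move=> Y; case sY: (Y \subset S :\ e) => //=; rewrite (coloop_indep eS lt sY).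
rewrite -big_split /= /tp mulr_sumr; apply: eq_bigr => Y /andP[sY iY].
have eY : e \notin Y by move: sY; rewrite subsetD1 => /andP[].
have hc := indep_card sY iY.
rewrite cardsU1 eY add1n subSS subSn // exprS -{2}(mul1r (_ ^+ _)) -mulrDl.
by rewrite subrK.
Qed.

Lemma subset_card (S : {set E}) k : (k <= #|S|)%N ->
  exists2 X : {set E}, X \subset S & #|X| = k.
Proof.
elim/set_ind: S k => [|x S xS IH] k.
  rewrite cards0 leqn0 => /eqP->; exists set0; [exact: sub0set | exact: cards0].
rewrite cardsU1 xS add1n => hk; case: (leqP k #|S|) => h.
  have [X sX cX] := IH k h; exists X => //; apply: (subset_trans sX); exact: subsetUr.
have -> : k = #|S|.+1 by lia.
by exists (x |: S) => //; rewrite cardsU1 xS.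
Qed.

Lemma rr_set0 A0 : rr A0 set0 = 0%N.
Proof. by rewrite /rr set0U subnn. Qed.

Lemma tp_set0 A0 : tp A0 set0 = 1.
Proof.
rewrite /tp (big_pred1 set0); first by rewrite rr_set0 cards0.
move=> X /=; rewrite subset0; case: eqP => [->|] //=; by rewrite indep0.
Qed.

Lemma indep_def A0 X : indep A0 X = (rk (X :|: A0) == rk A0 + #|X|).
Proof. by []. Qed.
Lemma rr_def A0 S : rr A0 S = (rk (S :|: A0) - rk A0)%N.
Proof. by []. Qed.

Local Opaque Defs.rk Defs.ncomp indep rr tp.

Lemma main_claim n : forall (S A0 : {set E}) i, #|S| = n ->
  ((tp A0 S)`_i <= (U #|S| (rr A0 S) i)%:Z) /\
  ((tp A0 S)`_i = (U #|S| (rr A0 S) i)%:Z <->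
   (forall X : {set E}, X \subset S -> (#|X| <= rr A0 S - i)%N -> indep A0 X)).
Proof.
elim: n => [|n IH] S A0 i cS.
  have S0 := cards0_eq cS; subst S.
  have rr0 := rr_set0 A0.
  rewrite tp_set0.
  rewrite cards0 rr0 coef1 /U.
  have condT : forall X : {set E}, X \subset set0 -> (#|X| <= 0 - i)%N -> indep A0 X.
    by move=> X; rewrite subset0 => /eqP-> _; exact: indep0.
  by case: i condT => [|i] condT /=; split => //; split => // _.
have : (0 < #|S|)%N by rewrite cS.
case/card_gt0P => e eS.
have cS' : #|S :\ e| = n by move: cS; rewrite (cardsD1 e S) eS add1n => -[].
rewrite cS; have rrS' := rr_le A0 (S :\ e); rewrite cS' in rrS'.
case: (boolP (rk (e |: A0) == rk A0)) => [/eqP lp | nlp].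
  rewrite (tp_loop eS lp) (rr_loop eS lp).
  have [IH1 IH2] := IH (S :\ e) A0 i cS'; rewrite cS' in IH1 IH2.
  case: (ltnP i (rr A0 (S :\ e))) => ir.
    have lt : (U n (rr A0 (S :\ e)) i < U n.+1 (rr A0 (S :\ e)) i)%N.
      by apply: (U_loop_lt (m := n.+1)).
    split; first by apply: (le_trans IH1); rewrite lez_nat; exact: ltnW.
    split => h; exfalso.
      by move: IH1; rewrite h lez_nat leqNgt lt.
    have := h [set e]; rewrite sub1set eS cards1 => /(_ isT).
    have -> : (1 <= rr A0 (S :\ e) - i)%N by lia.
    have nd := loop_dep (Y := set0) lp (negbT (in_set0 e)).
    by rewrite setU0 in nd; move=> /(_ isT); exact/negP.
  have eqU : U n (rr A0 (S :\ e)) i = U n.+1 (rr A0 (S :\ e)) i.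
    by apply: (U_loop_ge (m := n.+1)).
  rewrite -eqU; split; first exact: IH1.
  have condT : forall X : {set E}, (#|X| <= rr A0 (S :\ e) - i)%N -> indep A0 X.
    move=> X cX; have /cards0_eq -> : #|X| = 0%N by lia.
    exact: indep0.
  by split => _; [move=> X _ /condT | apply/IH2 => X _ /condT].
have nl : rk (e |: A0) = (rk A0).+1.
  by have := rkU1_le A0 e; move/eqP: nlp; lia.
case: (boolP (rk ((S :\ e) :|: A0) < rk (S :|: A0))%N) => [co | nco].
  rewrite (tp_coloop eS co) coefXM (rr_coloop eS co).
  case: i => [|j] /=.
    rewrite U_zero //; split; first by [].

    case: (ltnP (rr A0 (S :\ e)) n) => rn.
      have pos : (0 < 'C(n, (rr A0 (S :\ e)).+1))%N by rewrite bin_gt0.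
      split => h; exfalso.
        by move: pos; have -> : 'C(n, (rr A0 (S :\ e)).+1) = 0%N by lia.
      have [X sX cX] : exists2 X : {set E}, X \subset S :\ e & #|X| = (rr A0 (S :\ e)).+1.
        by apply: subset_card; lia.
      have := h X (subset_trans sX (subD1set S e)); rewrite cX subn0 leqnn => /(_ isT).
      rewrite indep_def cX.
      have : (rk (X :|: A0) <= rk ((S :\ e) :|: A0))%N by apply: rk_mono; apply: setSU.
      have := rk_mono_U A0 (S :\ e); rewrite rr_def; move=> h1 h2 /eqP; lia.
    have rn' : rr A0 (S :\ e) = n by lia.
    rewrite rn' bin_small //; split => [_ X sX _|_]; last by [].
    apply: (indep_sub sX); rewrite indep_def cS.
    have := rr_coloop eS co; rewrite rn' rr_def; have := rk_mono_U A0 S.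
    move=> h1 h2; apply/eqP; lia.
  rewrite U_coloop //=.
  have [IH1 IH2] := IH (S :\ e) A0 j cS'; rewrite cS' in IH1 IH2.
  split; first exact: IH1.
  rewrite subSS; split => [/IH2 h X sX cX|h].
    case eX: (e \in X).
      rewrite -(setD1K eX) (coloop_indep eS co); first apply: h.
      - by apply: setSD.
      - by apply: leq_trans cX; apply: subset_leq_card; apply: subD1set.
      - by apply: setSD.
    by apply: h; last exact: cX; rewrite subsetD1 sX eX.
  by apply/IH2 => X sX cX; apply: h; last exact: cX; exact: subset_trans sX (subD1set S e).
rewrite (tp_gen eS nl nco) coefD.
have rr1 := rr_gen1 eS nco; have [rr2 r0] := rr_gen2 eS nl.
have [IH1 IH2] := IH (S :\ e) A0 i cS'; have [IH3 IH4] := IH (S :\ e) (e |: A0) i cS'.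
rewrite cS' rr1 in IH1 IH2; rewrite cS' rr2 in IH3 IH4; rewrite rr1 in rrS'.
have eU : U n.+1 (rr A0 S) i = (U n (rr A0 S) i + U n (rr A0 S).-1 i)%N.
  by apply: (U_pascal (m := n.+1)) => //; rewrite ltnS.
rewrite eU.
rewrite PoszD; split; first exact: lerD.
have -> : forall a b x y : int, a <= x -> b <= y -> (a + b = x + y <-> a = x /\ b = y).
  move=> a b x y h1 h2; split; [move=> h; split; lia | by case=> -> ->].
- split.
    case=> /IH2 hA /IH4 hB X sX cX; case eX: (e \in X).
      rewrite -(setD1K eX) indepU1; last 2 first.
      - exact: nl.
      - by rewrite !inE eqxx.
      apply: hB; first by apply: setSD.
      move: cX; rewrite (cardsD1 e X) eX; lia.
    by apply: hA; last exact: cX; rewrite subsetD1 sX eX.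
  move=> h; split; [apply/IH2 | apply/IH4] => X sX cX.
    by apply: h; last exact: cX; exact: subset_trans sX (subD1set S e).
  have eX : e \notin X by move: sX; rewrite subsetD1 => /andP[].
  case: (eqVneq X set0) => [->|Xn0]; first exact: indep0.
  rewrite -indepU1; last 2 first.
  - exact: nl.
  - exact: eX.
  apply: h.
    by rewrite subUset sub1set eS (subset_trans sX (subD1set S e)).
  have : (0 < #|X|)%N by rewrite card_gt0.
  rewrite cardsU1 eX; lia.
- exact: IH1.
- exact: IH3.
Qed.

Local Transparent Defs.rk Defs.ncomp indep rr tp.

Lemma tutte_x1E : tutte_x1 ends = tp set0 setT.
Proof.
rewrite /tutte_x1 /tutte (_ : (fun p : {poly int} => p.[1]) = horner_eval 1) //.
rewrite raddf_sum /tp [RHS]big_mkcond /=; apply: eq_bigr => A _.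
rewrite rmorphM rmorphXn rmorphB /= map_polyX rmorph1 map_polyC /=.
rewrite horner_evalE horner_exp !hornerE subrr expr0n subsetT /=.
have hc := rk_le_card A.
rewrite /indep setU0 rk0 add0n /rr setU0 rk0 subn0 /grank.
case: eqP => [h|h].
  rewrite (_ : rk A = #|A|); last by lia.
  by rewrite eqxx polyC1 mulr1.
rewrite ifF; first by rewrite polyC0 mulr0.
by apply/negbTE/eqP => e; apply: h; lia.
Qed.

End G.

Unset Implicit Arguments.
Local Open Scope ring_scope.

Theorem corollary3p8 (V E : finType) (ends : E -> V * V)
    (Hc : has_cycle ends) (i : nat) :
  (#|V|%:Z - (ncomp ends [set: E])%:Z - i%:Z < (girth Hc)%:Z) <->
  (tutte_x1 ends)`_i
    = binz (#|E|%:Z - i%:Z - 1) (#|V|%:Z - (ncomp ends [set: E])%:Z - i%:Z).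
Proof.
rewrite tutte_x1E /girth; case: ex_minnP => g cg gmin.
have g0 : (0 < g)%N by move: cg => /existsP[vs /existsP[es /and4P[]]].
have hr : #|V|%:Z - (ncomp ends setT)%:Z = (grank ends)%:Z.
  rewrite /grank /rk; have := ncomp_le ends setT; lia.
rewrite hr; set r := grank ends.
have rrT : rr ends set0 setT = r by rewrite /rr setU0 rk0 subn0.
have [le eqv] := @main_claim V E ends #|E| setT set0 i (cardsT E).
rewrite cardsT rrT in le eqv.
have idef : forall X : {set E}, indep ends set0 X = (rk ends X == #|X|).
  by move=> X; rewrite /indep setU0 rk0 add0n.
have [X0 cX0 dX0] := cyc1 cg.
have rm : (r < #|E|)%N.
  have := rk_addU ends (~: X0) X0; rewrite setUC setUCr -/(grank ends) -/r.
  have := cardsC X0; lia.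
have hb : binz (#|E|%:Z - i%:Z - 1) (r%:Z - i%:Z) = (U #|E| r i)%:Z.
  rewrite /binz /U; case: (leqP i r) => ir.
    have e1 : r%:Z - i%:Z = (r - i)%N%:Z by lia.
    have e2 : #|E|%:Z - i%:Z - 1 = (#|E|.-1 - i)%N%:Z by lia.
    by rewrite e1 e2.
  have hneg : (0 <= r%:Z - i%:Z) = false by apply/negbTE; rewrite -ltNge; lia.
  by rewrite hneg.
rewrite hb; split => h.
  apply/eqv => X _ cX.
  case: (boolP (indep ends set0 X)) => // nd; exfalso.
  have dep : (rk ends X < #|X|)%N.
    by move: nd; rewrite idef; have := rk_le_card ends X; lia.
  have [l lX cl] := cyc2 dep.
  have := gmin l cl; lia.
have cond := (proj1 eqv) h.
rewrite ltNge; apply/negP => hle.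
have := cond X0 (subsetT X0) ltac:(lia).
rewrite idef; lia.
Qed.
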